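(* Let $w$ be a packed word of length $n$, viewed as a map $w:[n]\to\mathbb{N}$. Define the double poset $P_w=([n],\leq_1,\leq_2)$ by $$i\leq_1 j \iff (i\geq j \text{ and } w(i)\leq w(j)),\qquad i\leq_2 j\iff (i\leq j\text{ and } w(i)\leq w(j)).$$ Then $P_w$ is a weak plane poset, and its total quasi-order $\preceq$ (given by $i\preceq j\iff (i\leq_1 j$ or $i\leq_2 j)$) is the total quasi-order associated to $w$, namely $i\preceq j \iff w(i)\leq w(j)$.
   Context: A packed word of length $n$ is a word $w(1)\cdots w(n)$ of positive integers whose set of letters is $\{1,\dots,k\}$ for some $k$ (equivalently, a surjection $[n]\to[k]$). A double poset is a finite set with two partial orders $\leq_1,\leq_2$. A weak plane poset is a double poset such that (1) $x\leq_1 y$ and $x\leq_2 y$ imply $x=y$, and (2) the relation $x\preceq y \iff (x\leq_1 y$ or $x\leq_2 y)$ is a total quasi-order (reflexive, transitive, all elements comparable, not necessarily antisymmetric). Total quasi-orders on $[n]$ are in bijection with packed words of length $n$: to a total quasi-order one associates the packed word $w$ with $w(i)\leq w(j)\iff i\preceq j$ (the $r$-th equivalence class, in increasing order, gives the positions of the letter $r$). *)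

(* Defs.v *)
From mathcomp Require Import all_boot.
Set Implicit Arguments. Unset Strict Implicit. Unset Printing Implicit Defensive.

Definition packed_word (n : nat) (w : 'I_n -> nat) : Prop :=
  exists k : nat, forall m : nat, (exists i : 'I_n, w i = m) <-> (1 <= m <= k).

Definition partial_order (T : eqType) (R : rel T) : Prop :=
  [/\ reflexive R, antisymmetric R & transitive R].

Definition total_quasi_order (T : eqType) (R : rel T) : Prop :=
  [/\ reflexive R, transitive R & total R].

Definition double_poset (T : finType) (le1 le2 : rel T) : Prop :=
  partial_order le1 /\ partial_order le2.

Definition dp_union (T : eqType) (le1 le2 : rel T) : rel T :=
  fun x y => le1 x y || le2 x y.

Definition weak_plane_poset (T : finType) (le1 le2 : rel T) : Prop :=
  [/\ double_poset le1 le2,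
      (forall x y, le1 x y -> le2 x y -> x = y)
    & total_quasi_order (dp_union le1 le2)].

Definition Pw_le1 (n : nat) (w : 'I_n -> nat) : rel 'I_n :=
  fun i j => (j <= i) && (w i <= w j).
Definition Pw_le2 (n : nat) (w : 'I_n -> nat) : rel 'I_n :=
  fun i j => (i <= j) && (w i <= w j).

(* Main.v *)
Require Import Defs.
From mathcomp Require Import all_boot.
From mathcomp Require Import zify.

Theorem mainTheorem2 (n : nat) (w : 'I_n -> nat) :
  packed_word w ->
  weak_plane_poset (Pw_le1 w) (Pw_le2 w) /\
  (forall i j : 'I_n, dp_union (Pw_le1 w) (Pw_le2 w) i j = (w i <= w j)).
Proof.
move=> _.
have E : forall i j : 'I_n, dp_union (Pw_le1 w) (Pw_le2 w) i j = (w i <= w j).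
  move=> i j; rewrite /dp_union /Pw_le1 /Pw_le2.
  case: (leqP j i) => /= H; case: (w i <= w j) => //=; rewrite ?andbF //.
  by rewrite ltnW.
split=> //; split.
- split; split.
  + by move=> i; rewrite /Pw_le1 !leqnn.
  + move=> i j /andP[/andP[h1 h2] /andP[h3 h4]]; apply: val_inj; rewrite /= in h1 h2 h3 h4 *; apply/eqP; by rewrite eqn_leq h1 h3.
  + move=> j i k /andP[h1 h2] /andP[h3 h4]; apply/andP; split; lia.
  + by move=> i; rewrite /Pw_le2 !leqnn.
  + move=> i j /andP[/andP[h1 h2] /andP[h3 h4]]; apply: val_inj; rewrite /= in h1 h2 h3 h4 *; apply/eqP; by rewrite eqn_leq h1 h3.
  + move=> j i k /andP[h1 h2] /andP[h3 h4]; apply/andP; split; lia.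
- move=> i j /andP[h1 h2] /andP[h3 h4]; apply: val_inj; apply/eqP; by rewrite eqn_leq h1 h3.
- split.
  + by move=> i; rewrite E.
  + by move=> j i k; rewrite !E; apply: leq_trans.
  + by move=> i j; rewrite !E leq_total.
Qed.
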